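(* Let $A\in\mathbb Z^{d\times n}$ with $\ker(A)\cap\mathbb N^n=\{0\}$. Let $\mathcal B$ be the set of minimal distance reducing Markov bases of $A$ and $\mathcal B^s$ the set of minimal strongly distance reducing Markov bases. Then, with elements of $\ker(A)$ identified with their negatives, $D(A)=\bigcap_{B\in\mathcal B}B$ and $D^w(A)=\bigcap_{B\in\mathcal B^s}B$; i.e., a nonzero $z\in\ker(A)$ lies in $D(A)$ if and only if $z\in B$ or $-z\in B$ for every $B\in\mathcal B$, and lies in $D^w(A)$ if and only if $z\in B$ or $-z\in B$ for every $B\in\mathcal B^s$.
   Context: For $z\in\mathbb Z^n$, $z^\pm\in\mathbb N^n$ are the unique vectors with disjoint supports and $z=z^+-z^-$; $\|\cdot\|$ is the $1$-norm; $\le$ is coordinatewise. A positive (resp. negative) distance decomposition of $z\in\ker(A)$ is $z=u+v$ with $u,v\in\ker(A)\setminus\{0\}$, $u^+\le z^+$ (resp. $u^-\le z^-$) and $\|v\|<\|z\|$. $D^+(A)$ (resp. $D^-(A)$) is the set of nonzero $z\in\ker(A)$ with no positive (resp. negative) distance decomposition; $D(A)=D^+(A)\cap D^-(A)$, $D^w(A)=D^+(A)\cup D^-(A)$. For nonzero $z\in\ker(A)$: $u$ reduces $z$ from $z^+$ if some $\varepsilon\in\{\pm1\}$ has $z^++\varepsilon u\in\mathbb N^n$ and $\|z^++\varepsilon u-z^-\|<\|z\|$; from $z^-$ if some $\varepsilon$ has $z^-+\varepsilon u\in\mathbb N^n$ and $\|z^+-(z^-+\varepsilon u)\|<\|z\|$.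 $B\subseteq\ker(A)$ is distance reducing if each nonzero $z$ is reduced from $z^+$ or $z^-$ by some element of $B$; strongly distance reducing if each nonzero $z$ is reduced from $z^+$ by some element of $B$ and from $z^-$ by some element of $B$. A minimal (strongly) distance reducing Markov basis is a (strongly) distance reducing set no proper subset of which is (strongly) distance reducing. *)

(* Defs.v *)
From HB Require Import structures.
From mathcomp Require Import all_boot all_order all_algebra.
Set Implicit Arguments. Unset Strict Implicit. Unset Printing Implicit Defensive.
Import Order.TTheory GRing.Theory Num.Theory.
Local Open Scope ring_scope.

Section Defs.
Variables (d n : nat) (A : 'M[int]_(d, n)).

Definition inker (z : 'cV[int]_n) : Prop := A *m z = 0.

Definition posp (z : 'cV[int]_n) : 'cV[int]_n := \col_i Num.max (z i 0) 0.
Definition negp (z : 'cV[int]_n) : 'cV[int]_n := \col_i Num.max (- z i 0) 0.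

Definition norm1 (z : 'cV[int]_n) : int := \sum_i `|z i 0|.

Definition nonneg (z : 'cV[int]_n) : Prop := forall i, 0 <= z i 0.

Definition lev (u v : 'cV[int]_n) : Prop := forall i, u i 0 <= v i 0.

Definition pos_dist_decomp (z : 'cV[int]_n) : Prop :=
  exists u v : 'cV[int]_n, [/\ inker u, inker v, u <> 0, v <> 0 &
    [/\ z = u + v, lev (posp u) (posp z) & norm1 v < norm1 z]].

Definition neg_dist_decomp (z : 'cV[int]_n) : Prop :=
  exists u v : 'cV[int]_n, [/\ inker u, inker v, u <> 0, v <> 0 &
    [/\ z = u + v, lev (negp u) (negp z) & norm1 v < norm1 z]].

Definition Dplus (z : 'cV[int]_n) : Prop :=
  [/\ inker z, z <> 0 & ~ pos_dist_decomp z].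
Definition Dminus (z : 'cV[int]_n) : Prop :=
  [/\ inker z, z <> 0 & ~ neg_dist_decomp z].
Definition Dset (z : 'cV[int]_n) : Prop := Dplus z /\ Dminus z.
Definition Dweak (z : 'cV[int]_n) : Prop := Dplus z \/ Dminus z.

Definition reduces_pos (u z : 'cV[int]_n) : Prop :=
  exists eps : int, (eps = 1 \/ eps = -1) /\
    nonneg (posp z + eps *: u) /\ norm1 (posp z + eps *: u - negp z) < norm1 z.

Definition reduces_neg (u z : 'cV[int]_n) : Prop :=
  exists eps : int, (eps = 1 \/ eps = -1) /\
    nonneg (negp z + eps *: u) /\ norm1 (posp z - (negp z + eps *: u)) < norm1 z.

Definition distance_reducing (B : 'cV[int]_n -> Prop) : Prop :=
  (forall b, B b -> inker b) /\
  forall z, inker z -> z <> 0 ->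
    exists u, B u /\ (reduces_pos u z \/ reduces_neg u z).

Definition strongly_distance_reducing (B : 'cV[int]_n -> Prop) : Prop :=
  (forall b, B b -> inker b) /\
  forall z, inker z -> z <> 0 ->
    (exists u, B u /\ reduces_pos u z) /\ (exists u, B u /\ reduces_neg u z).

Definition proper_subset (B' B : 'cV[int]_n -> Prop) : Prop :=
  (forall x, B' x -> B x) /\ exists x, B x /\ ~ B' x.

Definition minimal_DR_basis (B : 'cV[int]_n -> Prop) : Prop :=
  distance_reducing B /\ forall B', proper_subset B' B -> ~ distance_reducing B'.

Definition minimal_SDR_basis (B : 'cV[int]_n -> Prop) : Prop :=
  strongly_distance_reducing B /\
  forall B', proper_subset B' B -> ~ strongly_distance_reducing B'.

End Defs.

(* Main.v *)
Require Import Defs.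
From mathcomp Require Import all_boot all_order all_algebra zify.
From Stdlib Require Import Classical.
Import Order.TTheory GRing.Theory Num.Theory.
Local Open Scope ring_scope.
Section Abstract.
Variables (T : countType) (I : Type) (R : I -> T -> Prop).
Hypothesis Rfin : forall i, exists s : seq T, forall u, R i u -> u \in s.

Definition hits (S : T -> Prop) := forall i, exists u, S u /\ R i u.

Fixpoint Bk (B0 : T -> Prop) (k : nat) : T -> Prop :=
  match k with
  | 0 => B0
  | k.+1 => fun x => Bk B0 k x /\ ~ (pickle x = k /\ hits (fun y => Bk B0 k y /\ y <> x))
  end.

Lemma Bk_le B0 m k x : (m <= k)%N -> Bk B0 k x -> Bk B0 m x.
Proof.
elim: k => [|k IH]; first by rewrite leqn0 => /eqP ->.
rewrite leq_eqVlt => /orP [/eqP -> //|]; rewrite ltnS => mk [H _]; exact: IH.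
Qed.

Lemma Bk_hits B0 k : hits B0 -> hits (Bk B0 k).
Proof.
move=> h0; elim: k => [//|k IH].
case: (classic (exists x, pickle x = k /\ hits (fun y => Bk B0 k y /\ y <> x))).
- move=> [x [px hx]] i; have [u [[bu ux] ru]] := hx i.
  exists u; split=> //; split=> // [[pu _]].
  apply: ux; apply: (pcan_inj (@pickleK T)); congruence.
- move=> nx i; have [u [bu ru]] := IH i; exists u; split=> //; split=> // hh.
  by apply: nx; exists u.
Qed.

Lemma seq_bound (s : seq T) : exists N, forall x, x \in s -> (pickle x < N)%N.
Proof.
elim: s => [|a s [N HN]]; first by exists 0%N.
exists (maxn (pickle a).+1 N) => x; rewrite in_cons => /orP [/eqP ->|/HN]; lia.
Qed.

Lemma exists_minimal B0 : hits B0 -> exists B : T -> Prop,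
  [/\ forall x, B x -> B0 x, hits B &
    forall B', (forall x, B' x -> B x) -> forall x, B x -> ~ B' x -> ~ hits B'].
Proof.
move=> h0; exists (fun x => forall k, Bk B0 k x); split.
- by move=> x /(_ 0%N).
- move=> i; have [s Hs] := Rfin i; have [N HN] := seq_bound s.
  have [u [bu ru]] := Bk_hits B0 N h0 i; exists u; split=> //.
  have pu := HN _ (Hs _ ru).
  elim=> [|m IH]; first exact: (@Bk_le B0 0 N u (leq0n N) bu).
  case: (pickle u =P m) => [pm|pm].
    by apply: (@Bk_le B0 m.+1 N u _ bu); lia.
  by split=> // [[]].
- move=> B' sub x bx nb' hb'.
  have [_ []] := bx (pickle x).+1; split=> // i.
  have [u [bu ru]] := hb' i; exists u; split=> //; split; first exact: sub.
  by move=> ux; apply: nb'; rewrite -ux.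
Qed.
End Abstract.

Set Implicit Arguments.
Ltac clean := repeat match goal with
 | H : @eq (matrix _ _ _) _ _ |- _ => clear H
 | H : ~ _ |- _ => clear H
 | H : inker _ _ |- _ => clear H
 | H : nonneg _ |- _ => clear H
 | H : lev _ _ |- _ => clear H
 | H : _ <> _ |- _ => clear H
 end.
Ltac genlia := clean; repeat match goal with |- context [@fun_of_matrix ?R ?m ?k ?M ?i ?j] =>
  let x := fresh "x" in set x := (@fun_of_matrix R m k M i j); clearbody x; change int in x end;
  repeat match goal with H : ordinal _ |- _ => clear H end; lia.

Section Conc.
Variables (d n : nat) (A : 'M[int]_(d, n)).
Implicit Types (z u v : 'cV[int]_n).

Lemma scaleE (e : int) u i j : (e *: u) i j = (e * u i j)%R :> int.
Proof. by rewrite mxE. Qed.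

Lemma norm1_ge0 z : 0 <= norm1 z.
Proof. by rewrite /norm1 sumr_ge0. Qed.

Lemma norm1_entry z i : `|z i 0| <= norm1 z.
Proof.
by rewrite /norm1 (bigD1 i) //= lerDl sumr_ge0.
Qed.

Lemma norm1_gt0 z : z <> 0 -> 0 < norm1 z.
Proof.
move=> nz; case: (classic (exists i, z i 0 <> 0)) => [[i hi]|hn].
  by apply: (lt_le_trans _ (norm1_entry z i)); rewrite normr_gt0; apply/eqP.
exfalso; apply: nz; apply/matrixP => i j; rewrite ord1 mxE.
by apply: NNPP => h; apply: hn; exists i.
Qed.

Lemma norm1N z : norm1 (- z) = norm1 z.
Proof. by apply: eq_bigr => i _; rewrite mxE normrN. Qed.

Lemma norm1_dbl z : norm1 (z + z) = norm1 z + norm1 z.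
Proof. rewrite /norm1 -big_split; apply: eq_bigr => i _; rewrite mxE.
have h : `|z i 0 + z i 0| = `|z i 0| + `|z i 0| by lia.
exact: h. Qed.

Lemma inkerN u : inker A u -> inker A (- u).
Proof. by rewrite /inker mulmxN => ->; rewrite oppr0. Qed.
Lemma inkerZ (e : int) u : inker A u -> inker A (e *: u).
Proof. by rewrite /inker -scalemxAr => ->; rewrite scaler0. Qed.
Lemma inkerB u v : inker A u -> inker A v -> inker A (u - v).
Proof. by rewrite /inker mulmxBr => -> ->; rewrite subr0. Qed.

Lemma Dplus_red z u : Dplus A z -> inker A u -> reduces_pos u z -> u = z \/ u = - z.
Proof.
move=> [hz nz nd] hu [e [he [hnn hlt]]].
have E : posp z + e *: u - negp z = z - (- (e *: u)).
  by apply/matrixP => i j; rewrite ord1 /posp /negp ?scaleE !mxE; genlia.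
rewrite E in hlt.
case: (eqVneq (- (e *: u)) z) => [eq|ne].
  case: he => he; subst e.
    by right; rewrite -eq scale1r opprK.
  by left; rewrite -eq scaleN1r opprK.
exfalso; apply: nd; exists (- (e *: u)), (z - - (e *: u)); split.
- exact/inkerN/inkerZ.
- exact/inkerB/inkerN/inkerZ.
- by move=> h; rewrite h subr0 ltxx in hlt.
- by move/eqP; rewrite subr_eq0 => /eqP h; rewrite h eqxx in ne.
- split; first by rewrite addrC subrK.
  + move=> i; have := hnn i; rewrite /posp ?scaleE !mxE; genlia.
  + exact: hlt.
Qed.

Lemma Dminus_red z u : Dminus A z -> inker A u -> reduces_neg u z -> u = z \/ u = - z.
Proof.
move=> [hz nz nd] hu [e [he [hnn hlt]]].
have E : posp z - (negp z + e *: u) = z - e *: u.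
  by apply/matrixP => i j; rewrite ord1 /posp /negp ?scaleE !mxE; genlia.
rewrite E in hlt.
case: (eqVneq (e *: u) z) => [eq|ne].
  case: he => he; subst e.
    by left; rewrite -eq scale1r.
  by right; rewrite -eq scaleN1r opprK.
exfalso; apply: nd; exists (e *: u), (z - e *: u); split.
- exact/inkerZ.
- exact/inkerB/inkerZ.
- by move=> h; rewrite h subr0 ltxx in hlt.
- by move/eqP; rewrite subr_eq0 => /eqP h; rewrite h eqxx in ne.
- split; first by rewrite addrC subrK.
  + move=> i; have := hnn i; rewrite /negp ?scaleE !mxE; genlia.
  + exact: hlt.
Qed.

Lemma pos_decomp_red z : pos_dist_decomp A z ->
  exists x, [/\ inker A x, x <> z, x <> - z & reduces_pos x z].
Proof.
move=> [u [v [hu hv nu nv [ez hl hlt]]]].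
exists u; split=> //.
- by move=> h; apply: nv; move: ez; rewrite h -{1}(addr0 z) => /addrI.
- move=> h; have : v = z + z.
    by rewrite -{2}[z]opprK -h; move: ez => ->; rewrite [u + v]addrC addrK.
  move=> ev; rewrite ev norm1_dbl in hlt; have := norm1_ge0 z; genlia.
- exists (-1); split; first by right.
  split.
  + move=> i; have := hl i; rewrite ez /posp ?scaleE !mxE; genlia.
  + have -> : posp z + -1 *: u - negp z = v.
      by apply/matrixP => i j; rewrite ord1 ez /posp /negp ?scaleE !mxE; genlia.
    exact: hlt.
Qed.

Lemma neg_decomp_red z : neg_dist_decomp A z ->
  exists x, [/\ inker A x, x <> z, x <> - z & reduces_neg x z].
Proof.
move=> [u [v [hu hv nu nv [ez hl hlt]]]].
exists u; split=> //.
- by move=> h; apply: nv; move: ez; rewrite h -{1}(addr0 z) => /addrI.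
- move=> h; have : v = z + z.
    by rewrite -{2}[z]opprK -h; move: ez => ->; rewrite [u + v]addrC addrK.
  move=> ev; rewrite ev norm1_dbl in hlt; have := norm1_ge0 z; genlia.
- exists 1; split; first by left.
  split.
  + move=> i; have := hl i; rewrite ez /negp ?scaleE !mxE; genlia.
  + have -> : posp z - (negp z + 1 *: u) = v.
      by apply/matrixP => i j; rewrite ord1 ez /posp /negp ?scaleE !mxE; genlia.
    exact: hlt.
Qed.

Lemma red_pos_neg u z : reduces_pos u z -> reduces_neg u (- z).
Proof.
move=> [e [he [hnn hlt]]]; exists e; split=> //; split.
- by move=> i; have := hnn i; rewrite /posp /negp ?scaleE !mxE; genlia.
- rewrite norm1N.
  suff -> : posp (- z) - (negp (- z) + e *: u) = - (posp z + e *: u - negp z) by rewrite norm1N.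
  by apply/matrixP => i j; rewrite /posp /negp ?scaleE !mxE; genlia.
Qed.

Lemma red_neg_pos u z : reduces_neg u z -> reduces_pos u (- z).
Proof.
move=> [e [he [hnn hlt]]]; exists e; split=> //; split.
- by move=> i; have := hnn i; rewrite /posp /negp ?scaleE !mxE; genlia.
- rewrite norm1N.
  suff -> : posp (- z) + e *: u - negp (- z) = - (posp z - (negp z + e *: u)) by rewrite norm1N.
  by apply/matrixP => i j; rewrite /posp /negp ?scaleE !mxE; genlia.
Qed.

Lemma self_red (y : 'cV[int]_n) : y <> 0 -> reduces_pos y y /\ reduces_neg y y.
Proof.
move=> ny; have := @norm1_gt0 y ny => hp; split.
- exists (-1); split; first by right.
  split; first by move=> i; rewrite /posp ?scaleE !mxE; genlia.
  suff -> : posp y + -1 *: y - negp y = 0 by rewrite /norm1 big1 // => i _; rewrite mxE.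
  by apply/matrixP => i j; rewrite ord1 /posp /negp ?scaleE !mxE; genlia.
- exists 1; split; first by left.
  split; first by move=> i; rewrite /negp ?scaleE !mxE; genlia.
  suff -> : posp y - (negp y + 1 *: y) = 0 by rewrite /norm1 big1 // => i _; rewrite mxE.
  by apply/matrixP => i j; rewrite ord1 /posp /negp ?scaleE !mxE; genlia.
Qed.

Lemma red_bound z u : reduces_pos u z \/ reduces_neg u z ->
  forall i, `|u i 0| <= norm1 z + norm1 z.
Proof.
move=> [[e [he [_ hlt]]]|[e [he [_ hlt]]]] i.
- have h1 := norm1_entry (posp z + e *: u - negp z) i; have h2 := norm1_entry z i.
  have E : (posp z + e *: u - negp z) i 0 = z i 0 + e * u i 0.
    by rewrite /posp /negp ?scaleE !mxE; genlia.
  move: h1 h2 hlt; rewrite E; case: he => ->; genlia.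
- have h1 := norm1_entry (posp z - (negp z + e *: u)) i; have h2 := norm1_entry z i.
  have E : (posp z - (negp z + e *: u)) i 0 = z i 0 - e * u i 0.
    by rewrite /posp /negp ?scaleE !mxE; genlia.
  move: h1 h2 hlt; rewrite E; case: he => ->; genlia.
Qed.

Lemma red_fin z : exists s : seq 'cV[int]_n,
  forall u, reduces_pos u z \/ reduces_neg u z -> u \in s.
Proof.
pose K := absz (norm1 z + norm1 z).
have hK : (K%:Z = norm1 z + norm1 z) by have := norm1_ge0 z; rewrite /K; genlia.
exists [seq (\col_i ((nat_of_ord (f i))%:Z - K%:Z) : 'cV[int]_n) | f : {ffun 'I_n -> 'I_((K + K).+1)} <- enum {ffun 'I_n -> 'I_((K + K).+1)}].
move=> u /red_bound hb; apply/mapP.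
exists [ffun i => inord (absz (u i 0 + K%:Z))]; first by rewrite mem_enum.
apply/matrixP => i j; rewrite ord1 ?scaleE !mxE ffunE inordK; have := hb i; genlia.
Qed.

End Conc.

Arguments hits {T I}.
Arguments exists_minimal {T I}.

Section Main.
Variables (d n : nat) (A : 'M[int]_(d, n)).

Definition I1 := {z : 'cV[int]_n | inker A z /\ z <> 0}.
Definition R1 (i : I1) (u : 'cV[int]_n) := reduces_pos u (proj1_sig i) \/ reduces_neg u (proj1_sig i).
Definition R2 (i : I1 * bool) (u : 'cV[int]_n) :=
  if i.2 then reduces_pos u (proj1_sig i.1) else reduces_neg u (proj1_sig i.1).

Lemma R1fin i : exists s : seq 'cV[int]_n, forall u, R1 i u -> u \in s.
Proof. exact: red_fin. Qed.

Lemma R2fin i : exists s : seq 'cV[int]_n, forall u, R2 i u -> u \in s.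
Proof.
have [s hs] := red_fin (proj1_sig i.1); exists s => u; rewrite /R2.
by case: i.2 => h; apply: hs; [left|right].
Qed.

Lemma DR_hits B : distance_reducing A B <-> (forall b, B b -> inker A b) /\ hits R1 B.
Proof.
split.
- by move=> [hk hr]; split=> // [[z [hz nz]]]; exact: hr.
- by move=> [hk hr]; split=> // z hz nz; exact: (hr (exist _ z (conj hz nz))).
Qed.

Lemma SDR_hits B : strongly_distance_reducing A B <-> (forall b, B b -> inker A b) /\ hits R2 B.
Proof.
split.
- move=> [hk hr]; split=> // [[[z [hz nz]] b]]; rewrite /R2 /=.
  by have [h1 h2] := hr z hz nz; case: b.
- move=> [hk hr]; split=> // z hz nz; split.
  + exact: (hr (exist _ z (conj hz nz), true)).
  + exact: (hr (exist _ z (conj hz nz), false)).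
Qed.

Lemma self_red' (y : 'cV[int]_n) (z : 'cV[int]_n) : inker A y -> y <> 0 -> y <> z -> y <> - z ->
  inker A y /\ y <> z /\ y <> - z.
Proof. by []. Qed.

End Main.

Unset Implicit Arguments.

Theorem proposition8p5 (d n : nat) (A : 'M[int]_(d, n)) :
  (forall z : 'cV[int]_n, inker A z -> nonneg z -> z = 0) ->
  forall z : 'cV[int]_n, inker A z -> z <> 0 ->
    (Dset A z <-> (forall B, minimal_DR_basis A B -> B z \/ B (- z))) /\
    (Dweak A z <-> (forall B, minimal_SDR_basis A B -> B z \/ B (- z))).
Proof.
move=> _ z hz nz.
pose B0 := fun y : 'cV[int]_n => inker A y /\ y <> z /\ y <> - z.
split; split.
- case=> Dp Dm B [[Bk Bred] _]; have [u [bu [r|r]]] := Bred z hz nz.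
  + by case: (Dplus_red Dp (Bk u bu) r) => e; rewrite -e; [left|right].
  + by case: (Dminus_red Dm (Bk u bu) r) => e; rewrite -e; [left|right].
- move=> H; apply: NNPP => nD.
  have [x [hxk hxz hxnz hr]] : exists x, [/\ inker A x, x <> z, x <> - z &
      (reduces_pos x z /\ reduces_neg x (- z)) \/ (reduces_neg x z /\ reduces_pos x (- z))].
    case: (classic (pos_dist_decomp A z)) => [p|np].
      have [x [? ? ? r]] := pos_decomp_red p; exists x; split => //.
      by left; split => //; exact: red_pos_neg.
    case: (classic (neg_dist_decomp A z)) => [q|nq].
      have [x [? ? ? r]] := neg_decomp_red q; exists x; split => //.
      by right; split => //; exact: red_neg_pos.
    by exfalso; apply: nD; split; split.
  have h0 : hits (@R1 _ _ A) B0.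
    case=> y [hy ny]; rewrite /R1 /=.
    case: (eqVneq y z) => [->|yz].
      by exists x; split; [| case: hr => [[a _]|[a _]]; [left|right]].
    case: (eqVneq y (- z)) => [->|yz'].
      by exists x; split; [| case: hr => [[_ b]|[_ b]]; [right|left]].
    exists y; split; first by split=> //; split; apply/eqP.
    by have [a _] := self_red ny; left.
  have [B [sub hB minB]] := exists_minimal (@R1 _ _ A) (@R1fin _ _ A) B0 h0.
  have mB : minimal_DR_basis A B.
    split; first by apply/DR_hits; split=> // b /sub [].
    move=> B' [sub' [x0 [bx nb']]] dr; apply: (minB B' sub' x0 bx nb').
    by case/DR_hits: dr.
  by case: (H B mB) => /sub [_ [? ?]].
- case=> [Dp|Dm] B [[Bk Bred] _]; have [[u [bu r]] [u' [bu' r']]] := Bred z hz nz.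
  + by case: (Dplus_red Dp (Bk u bu) r) => e; rewrite -e; [left|right].
  + by case: (Dminus_red Dm (Bk u' bu') r') => e; rewrite -e; [left|right].
- move=> H; apply: NNPP => nD.
  have p : pos_dist_decomp A z.
    by apply: NNPP => np; apply: nD; left; split.
  have q : neg_dist_decomp A z.
    by apply: NNPP => nq; apply: nD; right; split.
  have [x1 [? ? ? r1]] := pos_decomp_red p.
  have [x2 [? ? ? r2]] := neg_decomp_red q.
  have h0 : hits (@R2 _ _ A) B0.
    case=> [[y [hy ny]] b]; rewrite /R2 /=.
    case: (eqVneq y z) => [->|yz].
      by case: b; [exists x1 | exists x2].
    case: (eqVneq y (- z)) => [->|yz'].
      case: b; [exists x2 | exists x1]; split=> //.
        exact: red_neg_pos.
      exact: red_pos_neg.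
    exists y; split; first by split=> //; split; apply/eqP.
    by have [a a'] := self_red ny; case: b.
  have [B [sub hB minB]] := exists_minimal (@R2 _ _ A) (@R2fin _ _ A) B0 h0.
  have mB : minimal_SDR_basis A B.
    split; first by apply/SDR_hits; split=> // b /sub [].
    move=> B' [sub' [x0 [bx nb']]] dr; apply: (minB B' sub' x0 bx nb').
    by case/SDR_hits: dr.
  by case: (H B mB) => /sub [_ [? ?]].
Qed.
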